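(* Let $A$ be an algebra over a field $\Bbbk$. Then $A$ admits a normalized nearly Frobenius coproduct if and only if $A$ has Hochschild cohomological dimension $0$.
   Context: Algebras are associative and unital; tensor products over $\Bbbk$; $m$ denotes multiplication. A nearly Frobenius coproduct on $A$ is a $\Bbbk$-linear map $\Delta:A\to A\otimes A$ with $\Delta\circ m=(1\otimes m)\circ(\Delta\otimes 1)=(m\otimes 1)\circ(1\otimes\Delta)$; it is normalized if $m\circ\Delta=\operatorname{Id}_A$. $A$ has Hochschild cohomological dimension $0$ if the Hochschild cohomology $H^n(A,M)$ vanishes for all $n\ge 1$ and all $A$-bimodules $M$. *)

(* Defs.v *)
From HB Require Import structures.
From mathcomp Require Import all_boot all_order all_algebra.
Set Implicit Arguments. Unset Strict Implicit. Unset Printing Implicit Defensive.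
Import GRing.Theory.
Local Open Scope ring_scope.

Section Defs.
Variables (R : fieldType) (A : algType R).

Definition bilinearAA (N : lmodType R) (beta : A -> A -> N) : Prop :=
  (forall (c : R) (a a' b : A), beta (c *: a + a') b = c *: beta a b + beta a' b) /\
  (forall (c : R) (a b b' : A), beta a (c *: b + b') = c *: beta a b + beta a b').

(* A formal sum  \sum_i x_i (x) y_i  is represented by the list of pairs (x_i, y_i). *)
Definition tens := seq (A * A).

(* Equality in A (x) A : the tensor product is the quotient of formal sums by
   the kernel of all bilinear maps (universal property). *)
Definition teq (s t : tens) : Prop :=
  forall (N : lmodType R) (beta : A -> A -> N), bilinearAA beta ->
    \sum_(p <- s) beta p.1 p.2 = \sum_(p <- t) beta p.1 p.2.

Definition tscale (c : R) (s : tens) : tens := [seq (c *: p.1, p.2) | p <- s].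

Definition tmul (s : tens) : A := \sum_(p <- s) p.1 * p.2.

Definition tlinear (D : A -> tens) : Prop :=
  forall (c : R) (a b : A), teq (D (c *: a + b)) (tscale c (D a) ++ D b).

(* Nearly Frobenius coproduct: Delta o m = (1 (x) m)(Delta (x) 1) = (m (x) 1)(1 (x) Delta),
   as maps A (x) A -> A (x) A; all three are linear, so it suffices to compare
   them on pure tensors a (x) b. *)
Definition nearly_frobenius (D : A -> tens) : Prop :=
  tlinear D /\
  forall a b : A,
    teq (D (a * b)) [seq (p.1, p.2 * b) | p <- D a] /\
    teq (D (a * b)) [seq (a * p.1, p.2) | p <- D b].

Definition normalized (D : A -> tens) : Prop := forall a : A, tmul (D a) = a.

Definition bimodule (M : lmodType R) (la : A -> M -> M) (ra : M -> A -> M) : Prop :=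
  (forall (c : R) (a a' : A) (m : M), la (c *: a + a') m = c *: la a m + la a' m)
  /\ (forall (c : R) (a : A) (m m' : M), la a (c *: m + m') = c *: la a m + la a m')
  /\ (forall (c : R) (a a' : A) (m : M), ra m (c *: a + a') = c *: ra m a + ra m a')
  /\ (forall (c : R) (a : A) (m m' : M), ra (c *: m + m') a = c *: ra m a + ra m' a)
  /\ (forall (a b : A) (m : M), la (a * b) m = la a (la b m)) /\
      (forall m : M, la 1 m = m)
  /\ (forall (a b : A) (m : M), ra m (a * b) = ra (ra m a) b) /\
      (forall m : M, ra m 1 = m)
  /\ (forall (a b : A) (m : M), la a (ra m b) = ra (la a m) b).

Definition upd n (x : 'I_n -> A) (i : 'I_n) (a : A) : 'I_n -> A :=
  fun j => if j == i then a else x j.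

Definition multilinear (M : lmodType R) n (f : ('I_n -> A) -> M) : Prop :=
  forall (x : 'I_n -> A) (i : 'I_n) (c : R) (a b : A),
    f (upd x i (c *: a + b)) = c *: f (upd x i a) + f (upd x i b).

(* (a_0, ..., a_n) |-> (a_0, ..., a_i a_{i+1}, ..., a_n)   (0 <= i < n) *)
Definition merge n (x : 'I_n.+1 -> A) (i : nat) : 'I_n -> A :=
  fun j => if (j < i)%N then x (inord j)
           else if j == i :> nat then x (inord j) * x (inord j.+1)
           else x (inord j.+1).

Definition hoch_d (M : lmodType R) (la : A -> M -> M) (ra : M -> A -> M) n
    (f : ('I_n -> A) -> M) : ('I_n.+1 -> A) -> M :=
  fun x =>
    la (x ord0) (f (fun j => x (lift ord0 j)))
    + \sum_(i < n) (-1) ^+ i.+1 *: f (merge x i)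
    + (-1) ^+ n.+1 *: ra (f (fun j => x (widen_ord (leqnSn n) j))) (x ord_max).

(* H^{n+1}(A, M) = 0 : every multilinear (n+1)-cocycle is a coboundary of a
   multilinear n-cochain. *)
Definition hochschild_vanishes (M : lmodType R) (la : A -> M -> M) (ra : M -> A -> M)
    (n : nat) : Prop :=
  forall f : ('I_n.+1 -> A) -> M, multilinear f ->
    (forall x, hoch_d la ra f x = 0) ->
    exists g : ('I_n -> A) -> M, multilinear g /\ forall x, f x = hoch_d la ra g x.

Definition hochschild_dim0 : Prop :=
  forall (M : lmodType R) (la : A -> M -> M) (ra : M -> A -> M),
    bimodule la ra -> forall n : nat, hochschild_vanishes la ra n.

End Defs.

(* Main.v *)
Require Import Defs.
From HB Require Import structures.
From mathcomp Require Import all_boot all_order all_algebra.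
From Stdlib Require Import ClassicalEpsilon FunctionalExtensionality PropExtensionality ProofIrrelevance.
Set Implicit Arguments. Unset Strict Implicit. Unset Printing Implicit Defensive.
Import GRing.Theory.
Local Open Scope ring_scope.

Section Gen.
Variables (R : fieldType) (A : algType R).

Definition sumb (N : lmodType R) (beta : A -> A -> N) (s : tens A) :=
  \sum_(p <- s) beta p.1 p.2.

Lemma sumb_cat (N : lmodType R) (beta : A -> A -> N) s t : sumb beta (s ++ t) = sumb beta s + sumb beta t.
Proof. by rewrite /sumb big_cat. Qed.
Lemma sumb_nil (N : lmodType R) (beta : A -> A -> N) : sumb beta [::] = 0.
Proof. by rewrite /sumb big_nil. Qed.
Lemma sumb_cons (N : lmodType R) (beta : A -> A -> N) p s : sumb beta (p :: s) = beta p.1 p.2 + sumb beta s.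
Proof. by rewrite /sumb big_cons. Qed.

Section Bil.
Variables (N : lmodType R) (beta : A -> A -> N).
Hypothesis hb : bilinearAA beta.
Let hbl := proj1 hb.
Let hbr := proj2 hb.
Lemma bilDl a a' b : beta (a + a') b = beta a b + beta a' b.
Proof. by rewrite -[in LHS](scale1r a) hbl scale1r. Qed.
Lemma bilDr a b b' : beta a (b + b') = beta a b + beta a b'.
Proof. by rewrite -[in LHS](scale1r b) hbr scale1r. Qed.
Lemma bil0l b : beta 0 b = 0.
Proof. by apply: (@addrI _ (beta 0 b)); rewrite -bilDl !addr0. Qed.
Lemma bil0r a : beta a 0 = 0.
Proof. by apply: (@addrI _ (beta a 0)); rewrite -bilDr !addr0. Qed.
Lemma bilZl c a b : beta (c *: a) b = c *: beta a b.
Proof. by rewrite -(addr0 (c *: a)) hbl bil0l addr0. Qed.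
Lemma bilZr c a b : beta a (c *: b) = c *: beta a b.
Proof. by rewrite -(addr0 (c *: b)) hbr bil0r addr0. Qed.
Lemma sumb_scale c (s : tens A) : sumb beta (tscale c s) = c *: sumb beta s.
Proof.
rewrite /sumb /tscale big_map scaler_sumr; apply: eq_bigr => p _; exact: bilZl.
Qed.
End Bil.

Lemma teq_refl (s : tens A) : teq s s. Proof. by []. Qed.
Lemma teq_sym (s t : tens A) : teq s t -> teq t s.
Proof. by move=> h N beta hb; rewrite (h N beta hb). Qed.
Lemma teq_trans (s t u : tens A) : teq s t -> teq t u -> teq s u.
Proof. by move=> h1 h2 N beta hb; rewrite (h1 N beta hb) (h2 N beta hb). Qed.
Lemma teq_cat (s s' t t' : tens A) : teq s s' -> teq t t' -> teq (s ++ t) (s' ++ t').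
Proof. move=> h1 h2 N beta hb; rewrite !big_cat /=; by rewrite (h1 N beta hb) (h2 N beta hb). Qed.

Lemma mul_bil : bilinearAA (fun x y : A => x * y).
Proof.
split=> c a a' b; first by rewrite mulrDl scalerAl.
by rewrite mulrDr scalerAr.
Qed.

Lemma tmul_teq (s t : tens A) : teq s t -> tmul s = tmul t.
Proof. move=> h; exact: (h _ _ mul_bil). Qed.

Lemma cid_eq (T : Type) (P Q : T -> Prop) (p : exists x, P x) (q : exists x, Q x) :
  P = Q -> proj1_sig (constructive_indefinite_description P p) =
           proj1_sig (constructive_indefinite_description Q q).
Proof. move=> E; subst Q; by rewrite (proof_irrelevance _ p q). Qed.

Definition canon (s : tens A) : tens A :=
  proj1_sig (constructive_indefinite_description (fun t => teq s t) (ex_intro _ s (teq_refl s))).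

Lemma canonP (s : tens A) : teq s (canon s).
Proof. rewrite /canon; case: constructive_indefinite_description => //. Qed.

Lemma canon_eq (s t : tens A) : teq s t -> canon s = canon t.
Proof.
move=> h; rewrite /canon.
have E : (fun u => teq s u) = (fun u => teq t u).
  apply: functional_extensionality => u; apply: propositional_extensionality.
  split=> h'; [exact: teq_trans (teq_sym h) h' | exact: teq_trans h h'].
exact: cid_eq E.
Qed.

Lemma canonK (s : tens A) : canon (canon s) = canon s.
Proof. apply: canon_eq; apply: teq_sym; exact: canonP. Qed.


Definition ompred (s : tens A) : bool := (canon s == s :> seq (A * A)) && (tmul s == 0).
Definition Om := {s : tens A | ompred s}.
HB.instance Definition _ := Choice.on Om.

Lemma canon_om (s : tens A) : tmul s = 0 -> ompred (canon s).
Proof.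
move=> h; apply/andP; split; first by rewrite canonK.
by rewrite -(tmul_teq (canonP s)) h.
Qed.

Lemma om0P : ompred (canon [::]).
Proof. apply: canon_om; by rewrite /tmul big_nil. Qed.
Definition om0 : Om := exist (fun s => ompred s) _ om0P.
Definition mk (s : tens A) : Om := insubd om0 (canon s).

Lemma mkE (s : tens A) : tmul s = 0 -> val (mk s) = canon s.
Proof. move=> h; by rewrite /mk val_insubd canon_om. Qed.

Lemma mk_teq (s : tens A) : tmul s = 0 -> teq (val (mk s)) s.
Proof. move=> h; rewrite mkE //; apply: teq_sym; exact: canonP. Qed.

Lemma om_tmul (u : Om) : tmul (val u) = 0.
Proof. by case: u => s /= /andP [_ /eqP]. Qed.

Lemma om_canon (u : Om) : canon (val u) = val u.
Proof. by case: u => s /= /andP [/eqP]. Qed.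

Lemma om_eq (u v : Om) : teq (val u) (val v) -> u = v.
Proof. move=> h; apply: val_inj; by rewrite -om_canon (canon_eq h) om_canon. Qed.

Lemma tmul_cat (s t : tens A) : tmul (s ++ t) = tmul s + tmul t.
Proof. by rewrite /tmul big_cat. Qed.
Lemma tmul_scale c (s : tens A) : tmul (tscale c s) = c *: tmul s.
Proof. exact: (sumb_scale mul_bil). Qed.

Definition omadd (u v : Om) : Om := mk (val u ++ val v).
Definition omopp (u : Om) : Om := mk (tscale (-1) (val u)).
Definition omscale (c : R) (u : Om) : Om := mk (tscale c (val u)).

Lemma sumb_mk (s : tens A) (N : lmodType R) (beta : A -> A -> N) : bilinearAA beta ->
  tmul s = 0 -> sumb beta (val (mk s)) = sumb beta s.
Proof. move=> hb h; exact: (mk_teq h hb). Qed.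

Section S.
Variables (N : lmodType R) (beta : A -> A -> N).
Hypothesis hb : bilinearAA beta.
Lemma sumb_add u v : sumb beta (val (omadd u v)) = sumb beta (val u) + sumb beta (val v).
Proof. by rewrite sumb_mk // ?sumb_cat // tmul_cat !om_tmul addr0. Qed.
Lemma sumb_sc c u : sumb beta (val (omscale c u)) = c *: sumb beta (val u).
Proof. by rewrite sumb_mk // ?(sumb_scale hb) // tmul_scale om_tmul scaler0. Qed.
Lemma sumb_opp u : sumb beta (val (omopp u)) = - sumb beta (val u).
Proof. by rewrite sumb_mk // ?(sumb_scale hb) ?scaleN1r // tmul_scale om_tmul scaler0. Qed.
Lemma sumb_0 : sumb beta (val om0) = 0.
Proof. rewrite /sumb /= -(canonP [::] hb); exact: big_nil. Qed.
End S.

Lemma om_eqS (u v : Om) :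
  (forall (N : lmodType R) (beta : A -> A -> N), bilinearAA beta ->
     sumb beta (val u) = sumb beta (val v)) -> u = v.
Proof. move=> h; apply: om_eq; exact: h. Qed.

Ltac omsolve := apply: om_eqS => ? ? ?;
  match goal with H : bilinearAA _ |- _ =>
  rewrite ?(sumb_add H, sumb_sc H, sumb_opp H, sumb_0 H) end.

Lemma omaddA : associative omadd.
Proof. move=> u v w; omsolve; by rewrite addrA. Qed.
Lemma omaddC : commutative omadd.
Proof. move=> u v; omsolve; by rewrite addrC. Qed.
Lemma omadd0 : left_id om0 omadd.
Proof. move=> u; omsolve; by rewrite add0r. Qed.
Lemma omaddN : left_inverse om0 omopp omadd.
Proof. move=> u; omsolve; by rewrite addNr. Qed.

HB.instance Definition _ := GRing.isZmodule.Build Om omaddA omaddC omadd0 omaddN.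

Lemma omscaleA a b v : omscale a (omscale b v) = omscale (a * b) v.
Proof. omsolve; by rewrite scalerA. Qed.
Lemma omscale1 : left_id 1 omscale.
Proof. move=> u; omsolve; by rewrite scale1r. Qed.
Lemma omscaleDr : right_distributive omscale omadd.
Proof. move=> c u v; omsolve; by rewrite scalerDr. Qed.
Lemma omscaleDl v : {morph omscale^~ v: a b / a + b >-> omadd a b}.
Proof. move=> a b; omsolve; by rewrite scalerDl. Qed.

HB.instance Definition _ := GRing.Zmodule_isLmodule.Build R Om omscaleA omscale1 omscaleDr omscaleDl.


Definition lmap (a : A) (s : tens A) : tens A := [seq (a * p.1, p.2) | p <- s].
Definition rmap (s : tens A) (a : A) : tens A := [seq (p.1, p.2 * a) | p <- s].

Lemma tmul_lmap a s : tmul (lmap a s) = a * tmul s.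
Proof. by rewrite /tmul /lmap big_map mulr_sumr; apply: eq_bigr => p _; rewrite mulrA. Qed.
Lemma tmul_rmap a s : tmul (rmap s a) = tmul s * a.
Proof. by rewrite /tmul /rmap big_map mulr_suml; apply: eq_bigr => p _; rewrite mulrA. Qed.

Definition omla (a : A) (u : Om) : Om := mk (lmap a (val u)).
Definition omra (u : Om) (a : A) : Om := mk (rmap (val u) a).

Lemma bil_l (N : lmodType R) (beta : A -> A -> N) a :
  bilinearAA beta -> bilinearAA (fun x y => beta (a * x) y).
Proof.
move=> hb; split=> c x x' y; first by rewrite mulrDr -scalerAr; exact: hb.1.
exact: hb.2.
Qed.
Lemma bil_r (N : lmodType R) (beta : A -> A -> N) a :
  bilinearAA beta -> bilinearAA (fun x y => beta x (y * a)).
Proof.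
move=> hb; split=> c x x' y; first exact: hb.1.
rewrite mulrDl -scalerAl; exact: hb.2.
Qed.

Section S2.
Variables (N : lmodType R) (beta : A -> A -> N).
Hypothesis hb : bilinearAA beta.
Lemma sumb_la a u : sumb beta (val (omla a u)) = sumb (fun x y => beta (a * x) y) (val u).
Proof. by rewrite sumb_mk // ?tmul_lmap ?om_tmul ?mulr0 // /sumb big_map. Qed.
Lemma sumb_ra a u : sumb beta (val (omra u a)) = sumb (fun x y => beta x (y * a)) (val u).
Proof. by rewrite sumb_mk // ?tmul_rmap ?om_tmul ?mul0r // /sumb big_map. Qed.
Lemma sumb_add' (u v : Om) : sumb beta (val (u + v)) = sumb beta (val u) + sumb beta (val v).
Proof. exact: sumb_add. Qed.
Lemma sumb_sc' c (u : Om) : sumb beta (val (c *: u)) = c *: sumb beta (val u).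
Proof. exact: sumb_sc. Qed.
End S2.

Lemma sumb_ext (N : lmodType R) (b1 b2 : A -> A -> N) s :
  (forall x y, b1 x y = b2 x y) -> sumb b1 s = sumb b2 s.
Proof. move=> h; apply: eq_bigr => p _; exact: h. Qed.

Ltac omsolve2 := apply: om_eqS => ? ? ?;
  match goal with H : bilinearAA _ |- _ =>
  rewrite ?(sumb_add' H, sumb_sc' H, sumb_la H, sumb_ra H, sumb_add' (bil_l _ H), sumb_sc' (bil_l _ H),
            sumb_add' (bil_r _ H), sumb_sc' (bil_r _ H), sumb_la (bil_l _ H), sumb_ra (bil_l _ H),
            sumb_la (bil_r _ H), sumb_ra (bil_r _ H)) end.

Lemma om_bimod : bimodule omla omra.
Proof.
split.
  move=> c a a' m; omsolve2.
  rewrite /sumb scaler_sumr -big_split; apply: eq_bigr => p _ /=.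
  match goal with H : bilinearAA _ |- _ => by rewrite mulrDl -scalerAl (bilDl H) (bilZl H) end.
split; first by move=> c a m m'; omsolve2.
split.
  move=> c a a' m; omsolve2.
  rewrite /sumb scaler_sumr -big_split; apply: eq_bigr => p _ /=.
  match goal with H : bilinearAA _ |- _ => by rewrite mulrDr -scalerAr (bilDr H) (bilZr H) end.
split; first by move=> c a m m'; omsolve2.
split; first by move=> a b m; omsolve2; apply: sumb_ext => x y; rewrite mulrA.
split; first by move=> m; omsolve2; apply: sumb_ext => x y; rewrite mul1r.
split; first by move=> a b m; omsolve2; apply: sumb_ext => x y; rewrite mulrA.
split; first by move=> m; omsolve2; apply: sumb_ext => x y; rewrite mulr1.
by move=> a b m; omsolve2.
Qed.


Lemma zh (V : zmodType) (u v w : V) : u - v - (u - w) + (v - w) = 0.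
Proof. by rewrite opprB addrACA (subrK v u) (addrAC w) subrr add0r subrr. Qed.

Lemma bilNl (N : lmodType R) (beta : A -> A -> N) a b :
  bilinearAA beta -> beta (- a) b = - beta a b.
Proof. move=> hb; by rewrite -[- a]scaleN1r (bilZl hb) scaleN1r. Qed.

Definition omf (x : 'I_1 -> A) : Om := mk [:: (x ord0, 1); (-1, x ord0)].

Lemma sumb_omf (N : lmodType R) (beta : A -> A -> N) x : bilinearAA beta ->
  sumb beta (val (omf x)) = beta (x ord0) 1 - beta 1 (x ord0).
Proof.
move=> hb; rewrite sumb_mk //.
  by rewrite /sumb !big_cons big_nil /= addr0 (bilNl _ _ hb).
by rewrite /tmul !big_cons big_nil /= mulr1 mulN1r addr0 subrr.
Qed.

Lemma upd1 (x : 'I_1 -> A) i v : upd x i v ord0 = v.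
Proof. by rewrite /upd (ord1 i) eqxx. Qed.

Lemma omf_ml : multilinear omf.
Proof.
move=> x i c a b; apply: om_eqS => N beta hb.
rewrite (sumb_add' hb) (sumb_sc' hb) !(sumb_omf _ hb) !upd1.
by rewrite (bilDl hb) (bilDr hb) (bilZl hb) (bilZr hb) scalerBr opprD addrACA.
Qed.

Lemma omf_cocycle x : hoch_d omla omra omf x = 0.
Proof.
apply: om_eqS => N beta hb.
rewrite /hoch_d big_ord1 (sumb_0 hb) !(sumb_add' hb) !(sumb_sc' hb) (sumb_la hb) (sumb_ra hb).
rewrite (sumb_omf _ (bil_l _ hb)) (sumb_omf _ (bil_r _ hb)) (sumb_omf _ hb).
have e1 : lift ord0 (ord0 : 'I_1) = ord_max :> 'I_2 by apply: val_inj.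
have e2 : widen_ord (leqnSn 1) (ord0 : 'I_1) = ord0 :> 'I_2 by apply: val_inj.
have e3 : inord 0 = ord0 :> 'I_2 by apply: val_inj; rewrite /= inordK.
have e4 : inord 1 = ord_max :> 'I_2 by apply: val_inj; rewrite /= inordK.
rewrite /Defs.merge /= e1 e2 e3 e4 expr1 expr2 mulN1r !scaleN1r opprK scale1r mulr1 mul1r.
exact: zh.
Qed.


Definition sepe (e : tens A) := tmul e = 1 /\ forall a, teq (lmap a e) (rmap e a).

Lemma sumb_lmap (N : lmodType R) (beta : A -> A -> N) a s :
  sumb beta (lmap a s) = sumb (fun x y => beta (a * x) y) s.
Proof. by rewrite /sumb big_map. Qed.
Lemma sumb_rmap (N : lmodType R) (beta : A -> A -> N) a s :
  sumb beta (rmap s a) = sumb (fun x y => beta x (y * a)) s.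
Proof. by rewrite /sumb big_map. Qed.

Lemma dim0_sep : hochschild_dim0 A -> exists e, sepe e.
Proof.
move=> H.
have [g [_ hg]] := H Om omla omra om_bimod 0 omf omf_ml omf_cocycle.
set w := g (fun j : 'I_0 => 0).
have Hw : forall a, omf (fun _ => a) = omla a w + (-1) ^+ 1 *: omra w a.
  move=> a; rewrite hg /hoch_d big_ord0 addr0 /w.
  have E0 : forall y : 'I_0 -> A, y = (fun j : 'I_0 => 0).
    by move=> y; apply: functional_extensionality => -[].
  by rewrite (E0 (fun=> a)).
exists ((1, 1) :: tscale (-1) (val w)); split.
  by rewrite /tmul big_cons -/(tmul _) tmul_scale om_tmul scaler0 mulr1 addr0.
move=> a N beta hb.
have := congr1 (fun u : Om => sumb beta (val u)) (Hw a).
rewrite /= (sumb_omf _ hb) (sumb_add' hb) (sumb_sc' hb) (sumb_la hb) (sumb_ra hb) expr1 scaleN1r => E.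
rewrite !big_cons /= mulr1 mul1r -/(sumb beta (lmap a _)) -/(sumb beta (rmap _ a)).
rewrite sumb_lmap sumb_rmap.
rewrite (sumb_scale (bil_l _ hb)) (sumb_scale (bil_r _ hb)) !scaleN1r.
apply/eqP; rewrite -subr_eq0 opprD opprK addrACA E.
by rewrite addrACA subrr addNr addr0.
Qed.


Lemma sep_NF e : sepe e -> exists D : A -> tens A, nearly_frobenius D /\ normalized D.
Proof.
case=> e1 e2; exists (fun a => lmap a e); split; last first.
  by move=> a; rewrite tmul_lmap e1 mulr1.
split.
  move=> c a b N beta hb; rewrite big_cat /= -/(sumb _ _) -/(sumb _ _) -/(sumb _ _).
  rewrite (sumb_scale hb) !sumb_lmap /sumb scaler_sumr -big_split; apply: eq_bigr => p _ /=.
  by rewrite mulrDl -scalerAl (bilDl hb) (bilZl hb).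
move=> a b; split.
  move=> N beta hb.
  have -> : [seq (p.1, p.2 * b) | p <- lmap a e] = rmap (lmap a e) b by [].
  rewrite -/(sumb _ _) -/(sumb _ _) sumb_rmap !sumb_lmap.
  have := e2 b _ _ (bil_l a hb); rewrite /lmap /rmap !big_map /= => E.
  rewrite /sumb -E; apply: eq_bigr => p _; by rewrite mulrA.
move=> N beta hb.
have -> : [seq (a * p.1, p.2) | p <- lmap b e] = lmap a (lmap b e) by [].
rewrite -/(sumb _ _) -/(sumb _ _) !sumb_lmap; apply: sumb_ext => x y; by rewrite mulrA.
Qed.

Lemma NF_sep (D : A -> tens A) : nearly_frobenius D -> normalized D -> sepe (D 1).
Proof.
case=> _ hD hn; split; first exact: hn.
move=> a; have [_ h2] := hD a 1; have [h1 _] := hD 1 a.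
rewrite mulr1 in h2; rewrite mul1r in h1.
exact: teq_trans (teq_sym h2) h1.
Qed.


Definition cons0 n (y : A) (x : 'I_n -> A) : 'I_n.+1 -> A :=
  fun j => if unlift ord0 j is Some k then x k else y.

Lemma cons0_0 n y (x : 'I_n -> A) : cons0 y x ord0 = y.
Proof. by rewrite /cons0 unlift_none. Qed.
Lemma cons0_lift n y (x : 'I_n -> A) k : cons0 y x (lift ord0 k) = x k.
Proof. by rewrite /cons0 liftK. Qed.
Lemma cons0_S n y (x : 'I_n -> A) (j : 'I_n.+1) (k : 'I_n) : val j = (val k).+1 -> cons0 y x j = x k.
Proof. move=> h; have -> : j = lift ord0 k by apply: val_inj; rewrite /= /bump /= h. exact: cons0_lift. Qed.
Lemma cons0_v0 n y (x : 'I_n -> A) (j : 'I_n.+1) : val j = 0%N -> cons0 y x j = y.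
Proof. move=> h; have -> : j = ord0 by apply: val_inj. exact: cons0_0. Qed.
Lemma cons0_in0 n y (x : 'I_n -> A) : cons0 y x (inord 0) = y.
Proof. by apply: cons0_v0; rewrite /= inordK. Qed.
Lemma cons0_inS n y (x : 'I_n.+1 -> A) m : (m <= n)%N -> cons0 y x (inord m.+1) = x (inord m).
Proof. move=> h; apply: cons0_S; rewrite /= !inordK //. Qed.

Lemma F2 n y (x : 'I_n -> A) : (fun j => cons0 y x (lift ord0 j)) = x.
Proof. apply: functional_extensionality => j; exact: cons0_lift. Qed.

Lemma F3 n y (x : 'I_n.+1 -> A) :
  Defs.merge (cons0 y x) 0 = cons0 (y * x ord0) (fun j => x (lift ord0 j)).
Proof.
apply: functional_extensionality => -[[|k] hk]; rewrite /Defs.merge /=.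
  rewrite cons0_in0 (cons0_inS _ _ (leq0n _)) cons0_v0 //.
  by congr (_ * x _); apply: val_inj; rewrite /= inordK.
rewrite (@cons0_inS _ _ _ k.+1 hk) (@cons0_S _ _ _ _ (Ordinal (hk : (k < n)%N))) //.
by congr (x _); apply: val_inj; rewrite /= inordK.
Qed.


Lemma F4 n y (x : 'I_n.+1 -> A) (i : nat) :
  Defs.merge (cons0 y x) i.+1 = cons0 y (Defs.merge x i).
Proof.
apply: functional_extensionality => -[[|k] hk]; rewrite /Defs.merge /=.
  by rewrite cons0_in0 cons0_v0.
have hk' : (k < n)%N by [].
rewrite (@cons0_S _ _ _ _ (Ordinal hk')) //= ltnS eqSS.
rewrite (@cons0_inS _ _ _ k.+1 hk) (@cons0_inS _ _ _ k (ltnW hk')) //.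
Qed.

Lemma F5 n y (x : 'I_n.+1 -> A) :
  (fun j : 'I_n.+1 => cons0 y x (widen_ord (leqnSn n.+1) j))
  = cons0 y (fun j : 'I_n => x (widen_ord (leqnSn n) j)).
Proof.
apply: functional_extensionality => -[[|k] hk].
  by rewrite !cons0_v0.
have hk1 : (k < n.+1)%N by apply: ltnW.
have hk' : (k < n)%N by [].
rewrite (@cons0_S _ _ _ _ (Ordinal hk1)) // (@cons0_S _ _ _ _ (Ordinal hk')) //.
by congr (x _); apply: val_inj.
Qed.

Lemma F6 n y (x : 'I_n.+1 -> A) : cons0 y x ord_max = x ord_max.
Proof. by apply: cons0_S. Qed.


Lemma cons0_upd n y (x : 'I_n -> A) i v :
  cons0 y (upd x i v) = upd (cons0 y x) (lift ord0 i) v.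
Proof.
apply: functional_extensionality => j; case: (unliftP ord0 j) => [k ->|->].
  by rewrite cons0_lift /upd (inj_eq (@lift_inj _ ord0)) cons0_lift.
by rewrite cons0_0 /upd (negbTE (neq_lift _ _)) cons0_0.
Qed.

Lemma cons0_upd0 n y (x : 'I_n -> A) : cons0 y x = upd (cons0 0 x) ord0 y.
Proof.
apply: functional_extensionality => j; case: (unliftP ord0 j) => [k ->|->].
  by rewrite cons0_lift /upd eq_sym (negbTE (neq_lift _ _)) cons0_lift.
by rewrite cons0_0 /upd eqxx.
Qed.

Section Lin.
Variables (U V : lmodType R) (h : U -> V).
Hypothesis hl : forall c x y, h (c *: x + y) = c *: h x + h y.
Lemma linD x y : h (x + y) = h x + h y.
Proof. by rewrite -[in LHS](scale1r x) hl scale1r. Qed.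
Lemma lin0 : h 0 = 0.
Proof. by apply: (@addrI _ (h 0)); rewrite -linD !addr0. Qed.
Lemma linZ c x : h (c *: x) = c *: h x.
Proof. by rewrite -(addr0 (c *: x)) hl lin0 addr0. Qed.
Lemma linN x : h (- x) = - h x.
Proof. by rewrite -scaleN1r linZ scaleN1r. Qed.
Lemma linS (I : Type) (r : seq I) (F : I -> U) : h (\sum_(i <- r) F i) = \sum_(i <- r) h (F i).
Proof. elim: r => [|a r IH]; by rewrite ?big_nil ?lin0 // !big_cons linD IH. Qed.
End Lin.


Lemma sep_dim0 e : sepe e -> hochschild_dim0 A.
Proof.
move=> [e1 e2] M la ra hbm n f fml fcoc.
case: hbm => hla_a [hla_m [hra_a [hra_m [hlaM [hla1 [hraM [hra1 hlr]]]]]]].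
pose g := fun x : 'I_n -> A => \sum_(p <- e) la p.1 (f (cons0 p.2 x)).
exists g; split.
  move=> x i c a b; rewrite /g scaler_sumr -big_split; apply: eq_bigr => p _ /=.
  by rewrite !cons0_upd fml hla_m.
move=> x.
have C : forall y, la y (f x) + ((-1) ^+ 1 *: f (cons0 (y * x ord0) (fun j => x (lift ord0 j)))
   + \sum_(i < n) (-1) ^+ i.+2 *: f (cons0 y (Defs.merge x i)))
   + (-1) ^+ n.+2 *: ra (f (cons0 y (fun j => x (widen_ord (leqnSn n) j)))) (x ord_max) = 0.
  move=> y; have := fcoc (cons0 y x); rewrite /hoch_d cons0_0 F2 big_ord_recl F3 F5 F6 /=.
  move=> h; rewrite -[RHS]h; congr (_ + (_ + _) + _); apply: eq_bigr => i _.
  by rewrite /bump add1n F4.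
have C' := fun y => (eqP (etrans (esym (addr_eq0 _ _)) (etrans (congr1 (fun z => z == 0) (addrA _ _ _)) (introT eqP (C y))))).
have hlm := fun a c m m' => hla_m c a m m'.
pose r := fun j : 'I_n => x (lift ord0 j).
pose w := fun j : 'I_n => x (widen_ord (leqnSn n) j).
have HX : \sum_(p <- e) la p.1 ((-1) ^+ 1 *: f (cons0 (p.2 * x ord0) r)) = - la (x ord0) (g r).
  rewrite /g (linS (hlm _)) -sumrN; apply: esym.
  have hb : bilinearAA (fun u v => la u (f (cons0 v r))).
    split=> c a a' b; first exact: hla_a.
    by rewrite [cons0 (c *: _ + _) _]cons0_upd0 fml -!cons0_upd0 hla_m.
  have := e2 (x ord0) _ _ hb; rewrite /lmap /rmap !big_map /= => E.
  under eq_bigr do rewrite -hlaM.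
  rewrite sumrN E -sumrN; apply: eq_bigr => p _.
  by rewrite (linZ (hlm _)) expr1 scaleN1r.
have HY : \sum_(p <- e) la p.1 (\sum_(i < n) (-1) ^+ i.+2 *: f (cons0 p.2 (Defs.merge x i)))
    = - \sum_(i < n) (-1) ^+ i.+1 *: g (Defs.merge x i).
  under eq_bigr do rewrite (linS (hlm _)).
  rewrite exchange_big /= -sumrN; apply: eq_bigr => i _.
  rewrite /g scaler_sumr -sumrN; apply: eq_bigr => p _.
  by rewrite (linZ (hlm _)) [(-1) ^+ i.+2]exprS mulN1r scaleNr.
have HW : \sum_(p <- e) la p.1 ((-1) ^+ n.+2 *: ra (f (cons0 p.2 w)) (x ord_max))
    = - ((-1) ^+ n.+1 *: ra (g w) (x ord_max)).
  rewrite /g (linS (fun c m m' => hra_m c (x ord_max) m m')) scaler_sumr -sumrN.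
  apply: eq_bigr => p _.
  by rewrite (linZ (hlm _)) hlr [(-1) ^+ n.+2]exprS mulN1r scaleNr.
rewrite -[f x]hla1 -e1 /tmul (linS (fun c a a' => hla_a c a a' (f x))).
under eq_bigr do rewrite hlaM C' (linN (hlm _)) !(linD (hlm _)).
rewrite sumrN !big_split /= HX HY HW /hoch_d /r /w.
by rewrite !opprD !opprK.
Qed.

End Gen.

Theorem proposition27 (R : fieldType) (A : algType R) :
  (exists D : A -> tens A, nearly_frobenius D /\ normalized D) <-> hochschild_dim0 A.
Proof.
split.
  by case=> D [nf nn]; exact: sep_dim0 (NF_sep nf nn).
by move=> H; have [e he] := dim0_sep H; exact: sep_NF he.
Qed.
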